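(* Let $p$ be a positive stochastic choice function on a finite set $X$ such that (a) there exist $a,b,c\in X$ with $a\not\simeq_p b$, $b\not\simeq_p c$, $a\not\simeq_p c$, and (b) for every $x\in X$ there exist $y,z\in X$ with $x\bowtie_p y$, $y\bowtie_p z$ and $x\bowtie_p z$. If $p$ satisfies Generalized Independence of Symmetric Alternatives and Consistency of Revealed Similarities, then $p$ is a 3-step Nested Stochastic Choice.
   Context: $\mathscr{A}$ is the collection of nonempty subsets of $X$; $p(x,A)=0$ for $x\notin A$, $\sum_{a\in A}p(a,A)=1$, $p(a,A)>0$ for $a\in A$; $A\cup x=A\cup\{x\}$. $a\sim_p b$ means $\frac{p(a,A)}{p(b,A)}=\frac{p(a,\{a,b\})}{p(b,\{a,b\})}$ for all $A\ni a,b$. Approximate revealed similarity: $a\bowtie_p b$ iff $a\not\sim_p b$ and $\frac{p(a,A)}{p(b,A)}=\frac{p(a,A\cup x)}{p(b,A\cup x)}$ for every $A\in\mathscr{A}$ (containing $a,b$) and every $x\notin A$ with $x\not\sim_p a$ and $x\not\sim_p b$. Write $a\simeq_p b$ iff $a\sim_p b$ or $a\bowtie_p b$. Generalized Independence of Symmetric Alternatives: for any $A\in\mathscr{A}$, $a,b\in A$, $x\notin A$, if ($a\sim_p x$ and $b\sim_p x$) or ($a\bowtie_p x$ and $b\bowtie_p x$) or ($a\not\simeq_p x$ and $b\not\simeq_p x$), then $\frac{p(a,A)}{p(b,A)}=\frac{p(a,A\cup x)}{p(b,A\cup x)}$. Consistency of Revealed Similarities: for any $x,y,x'\in X$ with $x\sim_p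 x'$: $x\bowtie_p y$ iff $x'\bowtie_p y$. 3-step NSC: there exist a partition $X_1,\dots,X_K$ of $X$, for each $k$ a partition $X_k^1,\dots,X_k^{q_k}$ of $X_k$, and functions $u:X\to\mathbb{R}_{++}$, $w:\bigcup_{i}2^{X_i}\to\mathbb{R}_+$, $v:\bigcup_k\bigcup_l 2^{X_k^l}\to\mathbb{R}_+$ with $w(\emptyset)=v(\emptyset)=0$, such that for every $A\in\mathscr{A}$ and $x\in A\cap X_k^j$, $p(x,A)=\frac{u(x)}{\sum_{y\in A\cap X_k^j}u(y)}\cdot\frac{v(A\cap X_k^j)}{\sum_{l=1}^{q_k}v(A\cap X_k^l)}\cdot\frac{w(A\cap X_k)}{\sum_{i=1}^K w(A\cap X_i)}$. *)

(* Defs.v *)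
From HB Require Import structures.
From mathcomp Require Import all_boot all_order all_algebra.
From mathcomp Require Import reals.
Set Implicit Arguments. Unset Strict Implicit. Unset Printing Implicit Defensive.
Import Order.TTheory GRing.Theory Num.Theory.
Local Open Scope ring_scope.

Section Defs.
Variables (R : realType) (X : finType).

Definition stochastic_choice (p : X -> {set X} -> R) : Prop :=
  forall A : {set X}, A != set0 ->
    (forall x, x \notin A -> p x A = 0) /\
    (\sum_(a in A) p a A = 1) /\
    (forall a, a \in A -> 0 < p a A).

Definition rsim (p : X -> {set X} -> R) (a b : X) : Prop :=
  forall A : {set X}, a \in A -> b \in A ->
    p a A / p b A = p a [set a; b] / p b [set a; b].

Definition rbowtie (p : X -> {set X} -> R) (a b : X) : Prop :=
  ~ rsim p a b /\
  forall (A : {set X}) (x : X), a \in A -> b \in A -> x \notin A ->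
    ~ rsim p x a -> ~ rsim p x b ->
    p a A / p b A = p a (x |: A) / p b (x |: A).

Definition rsimeq (p : X -> {set X} -> R) (a b : X) : Prop :=
  rsim p a b \/ rbowtie p a b.

Definition GISA (p : X -> {set X} -> R) : Prop :=
  forall (A : {set X}) (a b x : X), a \in A -> b \in A -> x \notin A ->
    ((rsim p a x /\ rsim p b x) \/ (rbowtie p a x /\ rbowtie p b x)
     \/ (~ rsimeq p a x /\ ~ rsimeq p b x)) ->
    p a A / p b A = p a (x |: A) / p b (x |: A).

Definition CRS (p : X -> {set X} -> R) : Prop :=
  forall x y x' : X, rsim p x x' -> (rbowtie p x y <-> rbowtie p x' y).

(* The functions w, v are total on
   {set X}; only their values on subsets of blocks matter. *)
Definition NSC3 (p : X -> {set X} -> R) : Prop :=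
  exists (P : {set {set X}}) (Q : {set X} -> {set {set X}})
         (u : X -> R) (w v : {set X} -> R),
    partition P [set: X] /\
    (forall B, B \in P -> partition (Q B) B) /\
    (forall x, 0 < u x) /\
    (forall S, 0 <= w S) /\ (forall S, 0 <= v S) /\
    w set0 = 0 /\ v set0 = 0 /\
    forall (A : {set X}) (x : X), A != set0 -> x \in A ->
      let Xk := pblock P x in
      let Xkj := pblock (Q Xk) x in
      p x A =
        (u x / \sum_(y in A :&: Xkj) u y) *
        (v (A :&: Xkj) / \sum_(B in Q Xk) v (A :&: B)) *
        (w (A :&: Xk) / \sum_(B in P) w (A :&: B)).

End Defs.

(* Main.v *)
Require Import Defs.
From HB Require Import structures.
From mathcomp Require Import all_boot all_order all_algebra.
From mathcomp Require Import reals.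
From mathcomp Require Import ring boolp.
Import Order.TTheory GRing.Theory Num.Theory.
Set Implicit Arguments. Unset Strict Implicit. Unset Printing Implicit Defensive.
Local Open Scope ring_scope.

Section Luce.
Variables (R : realType) (X : finType) (E : rel X) (D : {set X}).
Hypotheses (Erefl : forall x, E x x) (Esym : forall x y, E x y -> E y x)
  (Etrans : forall x y z, E x y -> E y z -> E x z).

Definition sing (S : {set X}) :=
  S != set0 /\ S \subset D /\ (forall s t, s \in S -> t \in S -> E s t).
Definition sep (S T : {set X}) := forall s t, s \in S -> t \in T -> ~~ E s t.

Variables (G : {set X} -> {set X} -> R) (a b c : X).
Hypotheses (aD : a \in D) (bD : b \in D) (cD : c \in D)
  (nab : ~~ E a b) (nbc : ~~ E b c) (nac : ~~ E a c).
Hypothesis Gpos0 : forall S T, 0 <= G S T.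
Hypothesis Gpos : forall S T, sing S -> sing T -> sep S T -> 0 < G S T.
Hypothesis Ginv : forall S T, sing S -> sing T -> sep S T -> G S T * G T S = 1.
Hypothesis Gco : forall S T V, sing S -> sing T -> sing V ->
  sep S T -> sep T V -> sep S V -> G S T = G S V * G V T.

Definition wl (S : {set X}) :=
  if [forall s in S, ~~ E s a] then G S [set a] else G S [set b] * G [set b] [set a].

Lemma sing1 x : x \in D -> sing [set x].
Proof.
move=> xD; split; first by apply/set0Pn; exists x; rewrite inE.
split; first by rewrite sub1set.
by move=> s t /set1P-> /set1P->.
Qed.

Lemma sep_sym (S T : {set X}) : sep S T -> sep T S.
Proof. move=> H s t sS tT; apply/negP => /Esym; apply/negP; exact: H. Qed.

Lemma sep11 x y : ~~ E x y -> sep [set x] [set y].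
Proof. by move=> h s t /set1P-> /set1P->. Qed.

Lemma sep1r (S : {set X}) x : (forall s, s \in S -> ~~ E s x) -> sep S [set x].
Proof. by move=> h s t sS /set1P->; apply: h. Qed.

Lemma sepE (S : {set X}) x : sing S -> ~~ [forall s in S, ~~ E s x] -> forall s, s \in S -> E s x.
Proof.
move=> [_ [_ hS]] /forall_inPn [s0 s0S] /negPn e0 s sS.
exact: Etrans (hS _ _ sS s0S) e0.
Qed.

Lemma sepS (S : {set X}) x : [forall s in S, ~~ E s x] -> sep S [set x].
Proof. by move/forall_inP => h; apply: sep1r. Qed.

Lemma inclass_sep (S : {set X}) x y : (forall s, s \in S -> E s x) -> ~~ E x y -> sep S [set y].
Proof.
move=> h nxy; apply: sep1r => s sS; apply: contra nxy => e.
exact: Etrans (Esym (h _ sS)) e.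
Qed.

Lemma wl_ge0 (S : {set X}) : 0 <= wl S.
Proof. by rewrite /wl; case: ifP => _; rewrite ?mulr_ge0. Qed.

Let sa := sing1 aD. Let sb := sing1 bD. Let sc := sing1 cD.

Lemma wl_gt0 (S : {set X}) : sing S -> 0 < wl S.
Proof.
move=> sS; rewrite /wl; case: ifP => h; first by apply: Gpos => //; apply: sepS; rewrite h.
have hS := sepE sS (negbT h).
apply: mulr_gt0; apply: Gpos => //; first exact: inclass_sep hS nab.
by apply: sep11; apply: contraNN nab; apply: Esym.
Qed.

Lemma Gneq0 (S T : {set X}) : sing S -> sing T -> sep S T -> G S T != 0.
Proof. by move=> *; rewrite gt_eqF // Gpos. Qed.

Lemma wl_case2 (S T : {set X}) : sing S -> sing T -> sep S T ->
  ~~ [forall s in S, ~~ E s a] -> G S T = wl S / wl T.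
Proof.
move=> sS sT sST h.
have hS := sepE sS h.
have Ta : [forall t in T, ~~ E t a].
  apply/forall_inP => t tT; apply/negP => eta.
  have [s0 s0S] : exists s, s \in S.
    by case: sS => /set0Pn [s ?] _; exists s.
  by move: (sST _ _ s0S tT); rewrite (Etrans (hS _ s0S) (Esym eta)).
rewrite /wl (negbTE h) Ta.
have sTa := sepS Ta.
have sSb := inclass_sep hS nab.
have sSc := inclass_sep hS nac.
have Hta := Ginv sT sa sTa.
have nba : ~~ E b a by apply: contraNN nab; apply: Esym.
have nca : ~~ E c a by apply: contraNN nac; apply: Esym.
have ncb : ~~ E c b by apply: contraNN nbc; apply: Esym.
have GTa := Gneq0 sT sa sTa.
case: (boolP [forall t in T, ~~ E t b]) => Tb.
  have sTb := sepS Tb.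
  rewrite (Gco sS sT sb sST sTb sSb).
  rewrite (Gco sb sT sa (sep_sym sTb) sTa (sep11 nba)).
  have -> : G [set a] T = (G T [set a])^-1.
    by apply: (mulfI GTa); rewrite Hta divff.
  by rewrite mulrA.
have hT := sepE sT Tb.
have sTc := inclass_sep hT nbc.
rewrite (Gco sS sT sc sST sTc sSc).
rewrite (Gco sS sb sc sSb (sep11 nbc) sSc).
rewrite (Gco sc sT sa (sep_sym sTc) sTa (sep11 nca)).
rewrite (Gco sc sa sb (sep11 nca) (sep11 nab) (sep11 ncb)).
have -> : G [set a] T = (G T [set a])^-1.
  by apply: (mulfI GTa); rewrite Hta divff.
by rewrite !mulrA.
Qed.

Lemma wl_main (S T : {set X}) : sing S -> sing T -> sep S T -> G S T = wl S / wl T.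
Proof.
move=> sS sT sST.
case: (boolP [forall s in S, ~~ E s a]) => hS; last exact: wl_case2.
case: (boolP [forall t in T, ~~ E t a]) => hT.
  have sSa := sepS hS; have sTa := sepS hT.
  rewrite (Gco sS sT sa sST sTa sSa) /wl hS hT.
  have GTa := Gneq0 sT sa sTa.
  have -> : G [set a] T = (G T [set a])^-1.
    by apply: (mulfI GTa); rewrite (Ginv sT sa sTa) divff.
  by [].
have e := wl_case2 sT sS (sep_sym sST) hT.
have GTS := Gneq0 sT sS (sep_sym sST).
have wS := wl_gt0 sS; have wT := wl_gt0 sT.
apply: (mulIf GTS); rewrite (Ginv sS sT sST) e.
by rewrite mulrA divfK ?divff // gt_eqF.
Qed.


Lemma luce3 : exists w : {set X} -> R, (forall S, 0 <= w S) /\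
  (forall S, sing S -> 0 < w S) /\
  (forall S T, sing S -> sing T -> sep S T -> G S T = w S / w T).
Proof.
exists wl; split; first exact: wl_ge0.
split; first exact: wl_gt0.
exact: wl_main.
Qed.

End Luce.

Section Basics.
Variables (R : realType) (X : finType) (p : X -> {set X} -> R).
Hypothesis Hsc : stochastic_choice p.
Hypothesis HG : GISA p.
Hypothesis HC : CRS p.

Notation r A a b := (p a A / p b A).

Lemma ppos x (A : {set X}) : x \in A -> 0 < p x A.
Proof.
move=> xA; have A0 : A != set0 by apply/set0Pn; exists x.
by have [_ [_ H]] := Hsc A0; apply: H.
Qed.

Lemma pneq0 x (A : {set X}) : x \in A -> p x A != 0.
Proof. by move=> xA; rewrite gt_eqF // ppos. Qed.

Lemma pge0 x (A : {set X}) : A != set0 -> 0 <= p x A.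
Proof.
move=> A0; have [H0 [_ H]] := Hsc A0.
by case: (boolP (x \in A)) => xA; [exact/ltW/H | rewrite H0].
Qed.

Lemma sim_refl a : rsim p a a.
Proof.
move=> A aA _; rewrite !divff // pneq0 //; by rewrite !inE eqxx.
Qed.

Lemma sim_sym a b : rsim p a b -> rsim p b a.
Proof.
move=> H A bA aA; have -> : [set b; a] = [set a; b] by rewrite setUC.
by rewrite -[LHS]invf_div (H A aA bA) invf_div.
Qed.


Lemma chain x y z (A : {set X}) : y \in A -> r A x z = r A x y * r A y z.
Proof. by move=> yA; rewrite mulrA divfK // pneq0. Qed.

Lemma U1id b (A : {set X}) : b \in A -> b |: A = A.
Proof. by move=> bA; apply/setUidPr; rewrite sub1set. Qed.

Lemma sim_trans a b c : rsim p a b -> rsim p b c -> rsim p a c.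
Proof.
move=> Hab Hbc.
have key : forall A : {set X}, a \in A -> c \in A ->
   r A a c = r [set a; b] a b * r [set b; c] b c.
  have k1 : forall A : {set X}, a \in A -> c \in A -> b \in A ->
     r A a c = r [set a; b] a b * r [set b; c] b c.
    by move=> A aA cA bA; rewrite (chain _ _ bA) (Hab A aA bA) (Hbc A bA cA).
  move=> A aA cA; case: (boolP (b \in A)) => bA; first exact: k1.
  rewrite (HG aA cA bA); last by left; split=> //; apply: sim_sym.
  by apply: k1; rewrite ?setU11 ?setU1r.
move=> A aA cA; rewrite key // key // !inE eqxx ?orbT //.
Qed.

Lemma bow_sym a b : rbowtie p a b -> rbowtie p b a.
Proof.
move=> [nab H]; split; first by move/sim_sym.
move=> A x bA aA xA nxb nxa.
by rewrite -[LHS]invf_div (H A x aA bA xA nxa nxb) invf_div.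
Qed.

Lemma bow_nsim a b : rbowtie p a b -> ~ rsim p a b.
Proof. by case. Qed.

Lemma simeq_sym a b : rsimeq p a b -> rsimeq p b a.
Proof. by case=> [/sim_sym|/bow_sym] H; [left|right]. Qed.

Lemma sim_bow a b c : rsim p a b -> rbowtie p b c -> rbowtie p a c.
Proof. by move=> sab; apply: (proj1 (HC c (sim_sym sab))). Qed.

Lemma bow_sim a b c : rbowtie p a b -> rsim p b c -> rbowtie p a c.
Proof.
move=> bab sbc; apply: bow_sym; apply: (proj1 (HC a sbc)); exact: bow_sym.
Qed.

Lemma bow_bow a b c : rbowtie p a b -> rbowtie p b c -> rsimeq p a c.
Proof.
move=> bab bbc; case: (EM (rsim p a c)) => sac; first by left.
right; split=> // A x aA cA xA nxa nxc.
case: (EM (rsim p x b)) => hxb.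
  apply: HG => //; right; left; split; apply: bow_sym.
    exact: (sim_bow hxb (bow_sym bab)).
  exact: (sim_bow hxb bbc).
have addb : forall B : {set X}, a \in B -> c \in B -> r B a c = r (b |: B) a c.
  move=> B aB cB; case: (boolP (b \in B)) => bB; first by rewrite U1id.
  by apply: HG => //; right; left; split=> //; apply: bow_sym.
have xb : x != b by apply/eqP => E; apply: hxb; rewrite E; apply: sim_refl.
have xbA : x \notin b |: A by rewrite in_setU1 negb_or xb.
have bbA : b \in b |: A by rewrite setU11.
rewrite addb // (chain _ _ bbA).
case: bab => _ H1; case: bbc => _ H2.
have abA : a \in b |: A by rewrite setU1r.
have cbA : c \in b |: A by rewrite setU1r.
rewrite (H1 (b |: A) x) //.
rewrite (H2 (b |: A) x) //.
rewrite -chain; last by rewrite !in_setU1 eqxx orbT.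
by rewrite setUCA -addb ?setU1r.
Qed.

Lemma simeq_trans a b c : rsimeq p a b -> rsimeq p b c -> rsimeq p a c.
Proof.
case=> [sab|bab] [sbc|bbc].
- by left; apply: sim_trans sbc.
- by right; apply: sim_bow bbc.
- by right; apply: bow_sim sbc.
- exact: bow_bow bbc.
Qed.


Lemma stable (a b : X) (ok : X -> Prop) :
  (forall (C : {set X}) x, a \in C -> b \in C -> x \notin C -> ok x ->
      r C a b = r (x |: C) a b) ->
  forall (A B : {set X}), B \subset A -> a \in B -> b \in B ->
    (forall x, x \in A :\: B -> ok x) -> r A a b = r B a b.
Proof.
move=> H A B; move: {2}#|A :\: B| (leqnn #|A :\: B|) => n.
elim: n A => [|n IH] A.
  rewrite leqn0 cards_eq0 setD_eq0 => AB BA _ _ _.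
  by have -> : A = B by apply/eqP; rewrite eqEsubset AB BA.
move=> hn BA aB bB hok.
case: (set_0Vmem (A :\: B)) => [E | [x xAB]].
  have AB : A \subset B by rewrite -setD_eq0 E.
  by have -> : A = B by apply/eqP; rewrite eqEsubset AB BA.
have xA : x \in A by move: xAB; rewrite inE => /andP[].
have xB : x \notin B by move: xAB; rewrite inE => /andP[].
have eA : A = x |: (A :\ x) by rewrite setD1K.
have aAx : a \in A :\ x.
  by rewrite !inE (subsetP BA _ aB) andbT; apply: contraNneq xB => <-.
have bAx : b \in A :\ x.
  by rewrite !inE (subsetP BA _ bB) andbT; apply: contraNneq xB => <-.
have xAx : x \notin A :\ x by rewrite !inE eqxx.
rewrite eA -(H (A :\ x) x) //; last by apply: hok.
apply: IH => //.
  - have e2 : (A :\ x) :\: B = (A :\: B) :\ x.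
      by apply/setP => y; rewrite !inE; case: (y == x); case: (y \in B).
    rewrite e2; move: hn; rewrite (cardsD1 x (A :\: B)) xAB.
    by rewrite add1n ltnS.
  - apply/subsetP => y yB; rewrite !inE (subsetP BA _ yB) andbT.
    by apply: contraNneq xB => <-.
  - by move=> y; rewrite !inE => /andP[yB /andP[_ yA]]; apply: hok; rewrite inE yB yA.
Qed.


Lemma inv_sub a b (A B : {set X}) : B \subset A -> a \in B -> b \in B ->
  rsimeq p a b -> (forall x, x \in A :\: B -> ~ rsim p x a /\ ~ rsim p x b) ->
  r A a b = r B a b.
Proof.
move=> BA aB bB [sab|[nab H]] hok.
  by rewrite (sab A (subsetP BA _ aB) (subsetP BA _ bB)) (sab B aB bB).
apply: (@stable a b (fun x => ~ rsim p x a /\ ~ rsim p x b)) => //.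
by move=> C x aC bC xC [h1 h2]; apply: H.
Qed.

Lemma inv_nest a b (A B : {set X}) : B \subset A -> a \in B -> b \in B ->
  (forall x, x \in A :\: B -> ~ rsimeq p x a /\ ~ rsimeq p x b) ->
  r A a b = r B a b.
Proof.
move=> BA aB bB hok; case: (EM (rsimeq p a b)) => hab.
  apply: inv_sub => // x /hok [h1 h2]; split=> h; [apply: h1|apply: h2]; by left.
apply: (@stable a b (fun x => ~ rsimeq p x a /\ ~ rsimeq p x b)) => //.
move=> C x aC bC xC [h1 h2]; apply: HG => //; right; right.
by split=> /simeq_sym.
Qed.

Lemma propc (A B : {set X}) : B \subset A -> B != set0 ->
  (forall s t, s \in B -> t \in B -> r A s t = r B s t) ->
  exists c, 0 < c /\ forall s, s \in B -> p s A = c * p s B.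
Proof.
move=> BA /set0Pn [t0 t0B] H.
have t0A := subsetP BA _ t0B.
exists (p t0 A / p t0 B); split; first by rewrite divr_gt0 ?ppos.
move=> s sB.
have e := H s t0 sB t0B.
have -> : p s A = r A s t0 * p t0 A by rewrite divfK // pneq0.
rewrite e; field; by rewrite pneq0.
Qed.

Definition q (S A : {set X}) := \sum_(y in S) p y A.

Lemma q_prop (A B : {set X}) c : (forall s, s \in B -> p s A = c * p s B) ->
  forall S : {set X}, S \subset B -> q S A = c * q S B.
Proof.
move=> H S SB; rewrite /q mulr_sumr; apply: eq_bigr => y yS.
by apply: H; apply: (subsetP SB).
Qed.

Lemma q_ge0 (S A : {set X}) : S \subset A -> 0 <= q S A.
Proof.
move=> SA; apply: sumr_ge0 => y yS; apply: pge0.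
by apply/set0Pn; exists y; apply: (subsetP SA).
Qed.

Lemma q_gt0 (S A : {set X}) : S \subset A -> S != set0 -> 0 < q S A.
Proof.
move=> SA /set0Pn [y yS]; rewrite /q (bigD1 y) //=.
apply: ltr_wpDr; last by apply: ppos; apply: (subsetP SA).
apply: sumr_ge0 => z /andP[zS _]; apply: pge0.
by apply/set0Pn; exists z; apply: (subsetP SA).
Qed.

Lemma qI (S A : {set X}) : A != set0 -> q (A :&: S) A = q S A.
Proof.
move=> A0.
rewrite /q [RHS](bigID [in A]) /=.
rewrite [X in _ = _ + X]big1 ?addr0; last first.
  by move=> y /andP[_ yA]; have [H0 _] := Hsc A0; rewrite H0.
by apply: eq_bigl => y; rewrite inE andbC.
Qed.


Lemma cdiv (c x y : R) : c != 0 -> (c * x) / (c * y) = x / y.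
Proof. by move=> c0; rewrite invfM mulrACA divff // mul1r. Qed.

Lemma qratio_sub (U W S T : {set X}) : W \subset U -> W != set0 ->
  (forall s t, s \in W -> t \in W -> rsimeq p s t) ->
  (forall x y, x \in U :\: W -> y \in W -> ~ rsim p x y) ->
  S \subset W -> T \subset W -> q S U / q T U = q S W / q T W.
Proof.
move=> WU W0 Hst Hout SW TW.
have [c [c0 Hc]] : exists c, 0 < c /\ forall s, s \in W -> p s U = c * p s W.
  apply: propc => // s t sW tW; apply: inv_sub => //; first exact: Hst.
  by move=> x xo; split; apply: Hout.
by rewrite (q_prop Hc SW) (q_prop Hc TW) cdiv // gt_eqF.
Qed.

Lemma qratio_nest (U W S T : {set X}) : W \subset U -> W != set0 ->
  (forall x y, x \in U :\: W -> y \in W -> ~ rsimeq p x y) ->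
  S \subset W -> T \subset W -> q S U / q T U = q S W / q T W.
Proof.
move=> WU W0 Hout SW TW.
have [c [c0 Hc]] : exists c, 0 < c /\ forall s, s \in W -> p s U = c * p s W.
  apply: propc => // s t sW tW; apply: inv_nest => //.
  by move=> x xo; split; apply: Hout.
by rewrite (q_prop Hc SW) (q_prop Hc TW) cdiv // gt_eqF.
Qed.

Definition Gq (S T : {set X}) := q S (S :|: T) / q T (S :|: T).

Definition sepR (rl : X -> X -> Prop) (S T : {set X}) :=
  forall s t, s \in S -> t \in T -> ~ rl s t.

Lemma two_sub (B X1 X2 X3 : {set X}) :
  (forall s t, s \in B -> t \in B -> rsimeq p s t) ->
  X1 \subset B -> X2 \subset B -> X1 != set0 ->
  sepR (rsim p) X1 X3 -> sepR (rsim p) X2 X3 ->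
  Gq X1 X2 = q X1 (X1 :|: X2 :|: X3) / q X2 (X1 :|: X2 :|: X3).
Proof.
move=> HB X1B X2B X10 s13 s23.
rewrite (@qratio_sub _ (X1 :|: X2)) //.
- exact: subsetUl.
- by apply: contraNneq X10; move/setP => E; apply/eqP/setP => y; move: (E y); rewrite !inE; case: (y \in X1).
- move=> s t; rewrite !inE => hs ht; apply: HB.
    by case/orP: hs => h; [apply: (subsetP X1B)|apply: (subsetP X2B)].
  by case/orP: ht => h; [apply: (subsetP X1B)|apply: (subsetP X2B)].
- move=> x y; rewrite !inE => /andP[hn hx] hy hxy.
  have x3 : x \in X3 by move: hn hx; case: (x \in X1); case: (x \in X2).
  case/orP: hy => hy.
    by apply: (s13 y x hy x3); apply: sim_sym.
  by apply: (s23 y x hy x3); apply: sim_sym.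
- exact: subsetUl.
- exact: subsetUr.
Qed.

Lemma two_nest (X1 X2 X3 : {set X}) : X1 != set0 ->
  sepR (rsimeq p) X1 X3 -> sepR (rsimeq p) X2 X3 ->
  Gq X1 X2 = q X1 (X1 :|: X2 :|: X3) / q X2 (X1 :|: X2 :|: X3).
Proof.
move=> X10 s13 s23.
rewrite (@qratio_nest _ (X1 :|: X2)) //.
- exact: subsetUl.
- by apply: contraNneq X10; move/setP => E; apply/eqP/setP => y; move: (E y); rewrite !inE; case: (y \in X1).
- move=> x y; rewrite !inE => /andP[hn hx] hy hxy.
  have x3 : x \in X3 by move: hn hx; case: (x \in X1); case: (x \in X2).
  case/orP: hy => hy.
    by apply: (s13 y x hy x3); apply: simeq_sym.
  by apply: (s23 y x hy x3); apply: simeq_sym.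
- exact: subsetUl.
- exact: subsetUr.
Qed.


Lemma sepR_sim_sym S T : sepR (rsim p) S T -> sepR (rsim p) T S.
Proof. by move=> H s t sS tT /sim_sym; apply: H. Qed.

Lemma sepR_simeq_sym S T : sepR (rsimeq p) S T -> sepR (rsimeq p) T S.
Proof. by move=> H s t sS tT /simeq_sym; apply: H. Qed.

Lemma U3a (S T V : {set X}) : S :|: V :|: T = S :|: T :|: V.
Proof. by apply/setP => y; rewrite !inE; case: (y \in S); case: (y \in T); case: (y \in V). Qed.
Lemma U3b (S T V : {set X}) : V :|: T :|: S = S :|: T :|: V.
Proof. by apply/setP => y; rewrite !inE; case: (y \in S); case: (y \in T); case: (y \in V). Qed.

Lemma chainq (S T V U : {set X}) : q V U != 0 ->
  q S U / q T U = (q S U / q V U) * (q V U / q T U).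
Proof. by move=> h; rewrite mulrA divfK. Qed.

Lemma three_sub (B S T V : {set X}) :
  (forall s t, s \in B -> t \in B -> rsimeq p s t) ->
  S \subset B -> T \subset B -> V \subset B ->
  S != set0 -> T != set0 -> V != set0 ->
  sepR (rsim p) S T -> sepR (rsim p) T V -> sepR (rsim p) S V ->
  Gq S T = Gq S V * Gq V T.
Proof.
move=> HB SB TB VB S0 T0 V0 sST sTV sSV.
rewrite (two_sub HB SB TB S0 sSV sTV).
rewrite (two_sub HB SB VB S0 sST (sepR_sim_sym sTV)) (two_sub HB VB TB V0 (sepR_sim_sym sSV) (sepR_sim_sym sST)).
rewrite (U3a S T V) (U3b S T V); apply: chainq; rewrite gt_eqF // q_gt0 //.
by apply/subsetP => y yV; rewrite !inE yV !orbT.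
Qed.

Lemma three_nest (S T V : {set X}) :
  S != set0 -> T != set0 -> V != set0 ->
  sepR (rsimeq p) S T -> sepR (rsimeq p) T V -> sepR (rsimeq p) S V ->
  Gq S T = Gq S V * Gq V T.
Proof.
move=> S0 T0 V0 sST sTV sSV.
rewrite (two_nest S0 sSV sTV).
rewrite (two_nest S0 sST (sepR_simeq_sym sTV)) (two_nest V0 (sepR_simeq_sym sSV) (sepR_simeq_sym sST)).
rewrite (U3a S T V) (U3b S T V); apply: chainq; rewrite gt_eqF // q_gt0 //.
by apply/subsetP => y yV; rewrite !inE yV !orbT.
Qed.

Lemma Gq_ge0 S T : 0 <= Gq S T.
Proof. by rewrite /Gq; apply: divr_ge0; apply: q_ge0; [exact: subsetUl|exact: subsetUr]. Qed.

Lemma Gq_gt0 S T : S != set0 -> T != set0 -> 0 < Gq S T.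
Proof.
by move=> S0 T0; rewrite /Gq; apply: divr_gt0; apply: q_gt0 => //; [exact: subsetUl|exact: subsetUr].
Qed.

Lemma Gq_inv S T : S != set0 -> T != set0 -> Gq S T * Gq T S = 1.
Proof.
move=> S0 T0; rewrite /Gq (setUC T S) mulrA divfK ?divff //; rewrite gt_eqF // q_gt0 //.
- exact: subsetUl.
- exact: subsetUr.
Qed.


Lemma share (Pp : {set {set X}}) (Dom A M0 : {set X}) (vv : {set X} -> R) :
  A != set0 -> partition Pp Dom -> q (A :&: M0) A != 0 -> vv (A :&: M0) != 0 ->
  (forall C, C \in Pp -> vv (A :&: C) = vv (A :&: M0) / q (A :&: M0) A * q (A :&: C) A) ->
  vv (A :&: M0) / \sum_(C in Pp) vv (A :&: C) = q (A :&: M0) A / q Dom A.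
Proof.
move=> A0 partP q0 v0 H.
rewrite (eq_bigr _ H) -mulr_sumr.
have -> : \sum_(C in Pp) q (A :&: C) A = q Dom A.
  rewrite /q (set_partition_big _ partP); apply: eq_bigr => C _.
  by have := qI C A0; rewrite /q.
by rewrite invfM invf_div mulrA mulrCA divff // mulr1.
Qed.

End Basics.

Unset Implicit Arguments.


Lemma eqrel_of (X : finType) (E : rel X) : (forall x, E x x) ->
  (forall x y, E x y -> E y x) -> (forall x y z, E x y -> E y z -> E x z) ->
  equivalence_rel E.
Proof.
move=> r s t x y z; split=> // hxy; apply/idP/idP => h.
  exact: t (s _ _ hxy) h.
exact: t hxy h.
Qed.

Theorem theorem6 (R : realType) (X : finType) (p : X -> {set X} -> R) :
  stochastic_choice p ->
  (exists a b c : X, ~ rsimeq p a b /\ ~ rsimeq p b c /\ ~ rsimeq p a c) ->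
  (forall x : X, exists y z : X,
      rbowtie p x y /\ rbowtie p y z /\ rbowtie p x z) ->
  GISA p -> CRS p ->
  NSC3 p.
Proof.
move=> Hsc [a0 [b0 [c0 [n1 [n2 n3]]]]] Hb HG HC.
pose simb : rel X := fun x y => `[< rsim p x y >].
pose seqb : rel X := fun x y => `[< rsimeq p x y >].
have simbP x y : reflect (rsim p x y) (simb x y) := asboolP _.
have seqbP x y : reflect (rsimeq p x y) (seqb x y) := asboolP _.
have simb_r x : simb x x by apply/simbP; exact: sim_refl.
have simb_s x y : simb x y -> simb y x by move/simbP/sim_sym/simbP.
have simb_t x y z : simb x y -> simb y z -> simb x z.
  by move/simbP => h1 /simbP h2; apply/simbP; apply: (sim_trans Hsc HG) h2.
have seqb_r x : seqb x x by apply/seqbP; left; exact: sim_refl.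
have seqb_s x y : seqb x y -> seqb y x by move/seqbP/simeq_sym/seqbP.
have seqb_t x y z : seqb x y -> seqb y z -> seqb x z.
  by move/seqbP => h1 /seqbP h2; apply/seqbP; apply: (simeq_trans Hsc HG HC) h2.
have sim_seq x y : simb x y -> seqb x y by move/simbP => h; apply/seqbP; left.
have EqS := @eqrel_of _ simb simb_r simb_s simb_t.
have EqE := @eqrel_of _ seqb seqb_r seqb_s seqb_t.
pose P := equivalence_partition seqb [set: X].
have partP : partition P [set: X].
  by apply: equivalence_partitionP => x y z _ _ _; apply: EqE.
pose Q := fun B : {set X} => equivalence_partition simb B.
have partQ B : partition (Q B) B.
  by apply: equivalence_partitionP => x y z _ _ _; apply: EqS.
have [coverP tiP nP0] := and3P partP.
have memN x y : (y \in pblock P x) = seqb x y.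
  by apply: pblock_equivalence_partition => //; apply: EqE.
have coverQ B : cover (Q B) = B by have [/eqP -> _ _] := and3P (partQ B).
have tiQ B : trivIset (Q B) by have [_ -> _] := and3P (partQ B).
have nQ0 B : set0 \notin Q B by have [_ _ ->] := and3P (partQ B).
have coverP' : cover P = [set: X] by apply/eqP.
have inP x : pblock P x \in P by apply: pblock_mem; rewrite coverP' inE.
have blockP B y : B \in P -> y \in B -> pblock P y = B.
  by move=> BP yB; apply: def_pblock.
have sub_cover (T : finType) (PP : {set {set T}}) C : C \in PP -> C \subset cover PP.
  by move=> CP; apply/subsetP => z zC; apply/bigcupP; exists C.
have memM x y : (y \in pblock (Q (pblock P x)) x) = simb x y.
  have xN : x \in pblock P x by rewrite memN.
  case: (boolP (y \in pblock P x)) => yN.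
    by apply: pblock_equivalence_partition => //; apply: EqS.
  apply/idP/idP => h.
    have : pblock (Q (pblock P x)) x \subset pblock P x.
      rewrite -{2}(coverQ (pblock P x)); apply: sub_cover; apply: pblock_mem.
      by rewrite coverQ.
    by move/subsetP/(_ _ h); rewrite (negbTE yN).
  by move: yN; rewrite memN (sim_seq _ _ h).
have inB B y z : B \in P -> y \in B -> z \in B -> rsimeq p y z.
  by move=> BP yB zB; apply/seqbP; rewrite -memN (blockP _ _ BP yB).
have memC N C y z : N \in P -> C \in Q N -> y \in C -> (z \in C) = simb y z.
  move=> NP CQ yC.
  have yN : y \in N by rewrite -(coverQ N); apply/bigcupP; exists C.
  rewrite -(def_pblock (tiQ N) CQ yC) -{1}(blockP _ _ NP yN).
  by rewrite memM.
have CsubN N C : C \in Q N -> C \subset N.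
  by move=> CQ; rewrite -{1}(coverQ N); apply: sub_cover.
have sepc S T : sep simb S T -> sepR (rsim p) S T.
  by move=> h s t sS tT /simbP; apply/negP; exact: h.
have sepe S T : sep seqb S T -> sepR (rsimeq p) S T.
  by move=> h s t sS tT /seqbP; apply/negP; exact: h.
have seq_bow u v : rbowtie p u v -> seqb u v by move=> h; apply/seqbP; right.
have Wex : forall B : {set X}, exists w : {set X} -> R, (forall S, 0 <= w S) /\
    (B \in P -> (forall S, sing simb B S -> 0 < w S) /\
      (forall S T, sing simb B S -> sing simb B T -> sep simb S T ->
         Gq p S T = w S / w T)).
  move=> B; case: (boolP (B \in P)) => BP; last by exists (fun _ => 0); split.
  have [x xB] : exists x, x \in B.
    by apply/set0Pn; apply: contraNneq nP0 => <-.
  have [y [z [bxy [byz bxz]]]] := Hb x.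
  have yB : y \in B by rewrite -(blockP _ _ BP xB) memN seq_bow.
  have zB : z \in B by rewrite -(blockP _ _ BP xB) memN seq_bow.
  have nxy : ~~ simb x y by apply/simbP; exact: (bow_nsim bxy).
  have nyz : ~~ simb y z by apply/simbP; exact: (bow_nsim byz).
  have nxz : ~~ simb x z by apply/simbP; exact: (bow_nsim bxz).
  have [] := @luce3 R X simb B simb_r simb_s simb_t (Gq p) x y z xB yB zB nxy nyz nxz.
  - by move=> S T; apply: Gq_ge0.
  - by move=> S T [S0 _] [T0 _] _; apply: Gq_gt0.
  - by move=> S T [S0 _] [T0 _] _; apply: Gq_inv.
  - move=> S T V [S0 [SB _]] [T0 [TB _]] [V0 [VB _]] sST sTV sSV.
    apply: (@three_sub R X p Hsc B) => //; try exact: sepc.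
    by move=> s t sB tB; apply: (inB B).
  move=> w [w0 [wpos wmain]]; exists w; split=> // _; split => //.
have [Wf HWf] := choice Wex.
have [wN [wN0 [wNpos wNmain]]] : exists w : {set X} -> R, (forall S, 0 <= w S) /\
    (forall S, sing seqb [set: X] S -> 0 < w S) /\
    (forall S T, sing seqb [set: X] S -> sing seqb [set: X] T -> sep seqb S T ->
         Gq p S T = w S / w T).
  have nab : ~~ seqb a0 b0 by apply/seqbP.
  have nbc : ~~ seqb b0 c0 by apply/seqbP.
  have nac : ~~ seqb a0 c0 by apply/seqbP.
  apply: (@luce3 R X seqb [set: X] seqb_r seqb_s seqb_t (Gq p) a0 b0 c0) => //.
  - by move=> S T; apply: Gq_ge0.
  - by move=> S T [S0 _] [T0 _] _; apply: Gq_gt0.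
  - by move=> S T [S0 _] [T0 _] _; apply: Gq_inv.
  - move=> S T V [S0 _] [T0 _] [V0 _] sST sTV sSV.
    by apply: three_nest => //; exact: sepe.
pose u := fun y => p y [set z | simb y z].
pose v := fun S : {set X} => if [pick z in S] is Some z then Wf (pblock P z) S else 0.
pose w := fun S : {set X} => if S == set0 then 0 else wN S.
exists P, Q, u, w, v.
split; first exact: partP.
split; first by move=> B _; apply: partQ.
split; first by move=> y; apply: (ppos Hsc); rewrite inE.
split; first by move=> S; rewrite /w; case: ifP.
split; first by move=> S; rewrite /v; case: pickP => // z _; have [h _] := HWf (pblock P z); exact: h.
split; first by rewrite /w eqxx.
split; first by rewrite /v; case: pickP => // z; rewrite inE.
move=> A x A0 xA /=.
set N := pblock P x; set M := pblock (Q N) x.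
have NP : N \in P := inP x.
have xN : x \in N by rewrite memN.
have xM : x \in M by rewrite /M memM.
have MQ : M \in Q N by apply: pblock_mem; rewrite coverQ.
have MN : M \subset N := CsubN _ _ MQ.
have xAM : x \in A :&: M by rewrite inE xA xM.
have AM0 : A :&: M != set0 by apply/set0Pn; exists x.
have qM0 : 0 < q p (A :&: M) A.
  by apply: (q_gt0 Hsc) => //; apply: subsetIl.
have qN0 : 0 < q p N A.
  rewrite -(qI Hsc N A0); apply: (q_gt0 Hsc); first exact: subsetIl.
  by apply/set0Pn; exists x; rewrite inE xA xN.
have F1 : \sum_(y in A :&: M) u y = u x / p x A * q p (A :&: M) A.
  rewrite /q mulr_sumr; apply: eq_bigr => y; rewrite inE => /andP[yA yM].
  have sxy : rsim p x y by apply/simbP; rewrite -memM.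
  have eMs : [set z | simb y z] = [set z | simb x z].
    apply/setP => z; rewrite !inE; apply/idP/idP => h.
      by apply: simb_t h; apply/simbP.
    by apply: simb_t h; apply: simb_s; apply/simbP.
  rewrite /u eMs; set Mx := [set z | simb x z].
  have xMx : x \in Mx by rewrite inE.
  have yMx : y \in Mx by rewrite inE; apply/simbP.
  have syx := sim_sym sxy.
  have e1 := syx Mx yMx xMx.
  have e2 := syx A yA xA.
  have -> : p y Mx = p y Mx / p x Mx * p x Mx by rewrite divfK // (pneq0 Hsc).
  rewrite e1 -e2; field; by rewrite (pneq0 Hsc).
have [_ HN] := HWf N; have [WNpos WNmain] := HN NP.
have vE (S : {set X}) : S \subset N -> S != set0 -> v S = Wf N S.
  move=> SN S0; rewrite /v; case: pickP => [z zS|none].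
    by rewrite (blockP _ _ NP (subsetP SN _ zS)).
  by case/set0Pn: S0 => z zS; move: (none z); rewrite zS.
have singC (C : {set X}) : C \in Q N -> A :&: C != set0 -> sing simb N (A :&: C).
  move=> CQ AC0; split=> //; split.
    by apply: subset_trans (CsubN _ _ CQ); apply: subsetIr.
  move=> s t; rewrite !inE => /andP[_ sC] /andP[_ tC].
  by rewrite -(memC N C s t NP CQ sC).
have vM : v (A :&: M) = Wf N (A :&: M).
  by apply: vE => //; apply: subset_trans MN; apply: subsetIr.
have vM0 : 0 < v (A :&: M) by rewrite vM; apply: WNpos; apply: singC.
have F2 : v (A :&: M) / \sum_(C in Q N) v (A :&: C) = q p (A :&: M) A / q p N A.
  apply: (share Hsc) => //; first by rewrite gt_eqF.
    by rewrite gt_eqF.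
  move=> C CQ.
  case: (boolP (A :&: C == set0)) => [/eqP AC0|AC0].
    rewrite AC0 /q big_set0 mulr0 /v; case: pickP => // z; by rewrite inE.
  case: (eqVneq C M) => [->|CM]; first by rewrite divfK // gt_eqF.
  have sepCM : sep simb (A :&: C) (A :&: M).
    move=> s t; rewrite !inE => /andP[_ sC] /andP[_ tM]; apply/negP => hst.
    have tC : t \in C by rewrite (memC N C s t NP CQ sC).
    have := def_pblock (tiQ N) CQ tC; rewrite (def_pblock (tiQ N) MQ tM).
    by move=> E; move: CM; rewrite E eqxx.
  have eG := WNmain _ _ (singC _ CQ AC0) (singC _ MQ AM0) sepCM.
  have eq : Gq p (A :&: C) (A :&: M) = q p (A :&: C) A / q p (A :&: M) A.
    rewrite /Gq (@qratio_sub R X p Hsc A ((A :&: C) :|: (A :&: M))) //.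
    - by rewrite subUset !subsetIl.
    - by apply/set0Pn; exists x; rewrite !inE xA xM orbT.
    - move=> s t; rewrite !inE => hs ht; apply: (inB N) => //.
        by case/orP: hs => /andP[_ h]; [apply: (subsetP (CsubN _ _ CQ))|apply: (subsetP MN)].
      by case/orP: ht => /andP[_ h]; [apply: (subsetP (CsubN _ _ CQ))|apply: (subsetP MN)].
    - move=> z y; rewrite !inE => /andP[hn zA] hy /simbP hzy.
      have hyz := simb_s _ _ hzy.
      case/orP: hy => /andP[_ hy].
        by move: hn; rewrite zA (memC N C y z NP CQ hy) hyz.
      by move: hn; rewrite zA (memC N M y z NP MQ hy) hyz orbT.
    - exact: subsetUl.
    - exact: subsetUr.
  rewrite vE //; last by apply: subset_trans (CsubN _ _ CQ); apply: subsetIr.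
  rewrite -vM in eG.
  have : Wf N (A :&: C) = v (A :&: M) * (q p (A :&: C) A / q p (A :&: M) A).
    by rewrite -eq eG mulrC divfK // gt_eqF.
  move->; field; by rewrite gt_eqF.
have memB B y z : B \in P -> y \in B -> (z \in B) = seqb y z.
  by move=> BP yB; rewrite -(blockP _ _ BP yB) memN.
have wE (S : {set X}) : S != set0 -> w S = wN S by move=> S0; rewrite /w (negbTE S0).
have singB (B : {set X}) : B \in P -> A :&: B != set0 -> sing seqb [set: X] (A :&: B).
  move=> BP AB0; split=> //; split; first exact: subsetT.
  move=> s t; rewrite !inE => /andP[_ sB] /andP[_ tB].
  by rewrite -(memB B s t BP sB).
have AN0 : A :&: N != set0 by apply/set0Pn; exists x; rewrite inE xA xN.
have wN0' : 0 < w (A :&: N) by rewrite wE //; apply: wNpos; apply: singB.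
have F3 : w (A :&: N) / \sum_(B in P) w (A :&: B) = q p (A :&: N) A / q p [set: X] A.
  apply: (share Hsc) => //.
  - by rewrite gt_eqF // (qI Hsc N A0).
  - by rewrite gt_eqF.
  move=> B BP.
  case: (boolP (A :&: B == set0)) => [/eqP AB0|AB0].
    by rewrite AB0 /q big_set0 mulr0 /w eqxx.
  case: (eqVneq B N) => [->|BN]; first by rewrite divfK // gt_eqF // (qI Hsc N A0).
  have sepBN : sep seqb (A :&: B) (A :&: N).
    move=> s t; rewrite !inE => /andP[_ sB] /andP[_ tN]; apply/negP => hst.
    have tB : t \in B by rewrite (memB B s t BP sB).
    by move: BN; rewrite -(blockP _ _ BP tB) -(blockP _ _ NP tN) eqxx.
  have eG := wNmain _ _ (singB _ BP AB0) (singB _ NP AN0) sepBN.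
  have eq : Gq p (A :&: B) (A :&: N) = q p (A :&: B) A / q p (A :&: N) A.
    rewrite /Gq (@qratio_nest R X p Hsc HG A ((A :&: B) :|: (A :&: N))) //.
    - by rewrite subUset !subsetIl.
    - by apply/set0Pn; exists x; rewrite !inE xA xN orbT.
    - move=> z y; rewrite !inE => /andP[hn zA] hy /seqbP hzy.
      have hyz := seqb_s _ _ hzy.
      case/orP: hy => /andP[_ hy].
        by move: hn; rewrite zA (memB B y z BP hy) hyz.
      by move: hn; rewrite zA (memB N y z NP hy) hyz orbT.
    - exact: subsetUl.
    - exact: subsetUr.
  rewrite -(wE _ AB0) -(wE _ AN0) in eG.
  have : w (A :&: B) = w (A :&: N) * (q p (A :&: B) A / q p (A :&: N) A).
    by rewrite -eq eG mulrC divfK // gt_eqF.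
  move->; field; by rewrite gt_eqF // (qI Hsc N A0).
have qT : q p [set: X] A = 1.
  rewrite -(@qI R X p Hsc [set: X] A A0) setIT; by have [_ [H _]] := Hsc A A0.
rewrite F1 F2 F3 qT (qI Hsc N A0).
have px0 : p x A != 0 by rewrite (pneq0 Hsc).
have ux0 : u x != 0 by rewrite gt_eqF // (ppos Hsc) // inE.
field; rewrite ?px0 ?ux0 ?gt_eqF //.
Qed.
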